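(* Let $P'$ be any transition kernel, i.e. $P'\in\mathbb R_+^{\mathcal S\times\mathcal A\times\mathcal S}$ with $\sum_{s'}P'(s'|s,a)=1$ for all $s,a$, and let $\pi:\mathcal S\to\Delta(\mathcal A)$ be any stationary policy. Then $\|\rho^{P,\pi}-\rho^{P',\pi}\|_1\le\frac{1}{\alpha S}\sum_{s\in\mathcal S,a\in\mathcal A}\rho^{P',\pi}(s,a)\sum_{s'\in\mathcal S}|P(s'|s,a)-P'(s'|s,a)|$.
   Context: $\mathcal S,\mathcal A$ finite with $S=|\mathcal S|$; $P$ is a transition kernel with $P(s'|s,a)\ge\alpha>0$ for all $s,s',a$. For a transition kernel $Q$ and stationary policy $\pi$, the state-action occupancy measure is $\rho^{Q,\pi}(s,a)=\lim_{T\to\infty}\frac1T\sum_{t=1}^T\Pr(s^t=s,a^t=a)$ for the process $a^t\sim\pi(\cdot|s^t)$, $s^{t+1}\sim Q(\cdot|s^t,a^t)$; equivalently $\rho^{Q,\pi}(s,a)=\nu^{Q,\pi}(s)\pi(a|s)$ with $\nu^{Q,\pi}$ the corresponding long-run state frequencies, which form a stationary distribution of the chain $Q^\pi(s'|s)=\sum_a Q(s'|s,a)\pi(a|s)$. *)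

(* Defs.v *)
From HB Require Import structures.
From mathcomp Require Import all_boot all_order all_algebra.
From mathcomp Require Import all_classical all_reals all_analysis.
Set Implicit Arguments. Unset Strict Implicit. Unset Printing Implicit Defensive.
Import Order.TTheory GRing.Theory Num.Theory.
Import numFieldNormedType.Exports.
Local Open Scope ring_scope.
Local Open Scope classical_set_scope.

Section Defs.
Variables (R : realType) (S A : finType).

(* Q s a s' stands for Q(s'|s,a) *)
Definition is_kernel (Q : S -> A -> S -> R) : Prop :=
  (forall s a s', 0 <= Q s a s') /\ (forall s a, \sum_(s' : S) Q s a s' = 1).

Definition is_policy (pi : S -> A -> R) : Prop :=
  (forall s a, 0 <= pi s a) /\ (forall s, \sum_(a : A) pi s a = 1).

Definition is_distr (mu : S -> R) : Prop :=
  (forall s, 0 <= mu s) /\ \sum_(s : S) mu s = 1.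

(* law of s^{t+1} for the process started from s^1 ~ mu0,
   a^t ~ pi(.|s^t), s^{t+1} ~ Q(.|s^t,a^t) *)
Fixpoint state_law (Q : S -> A -> S -> R) (pi : S -> A -> R) (mu0 : S -> R)
  (t : nat) : S -> R :=
  match t with
  | O => mu0
  | t'.+1 => fun s' => \sum_(s : S) \sum_(a : A)
       state_law Q pi mu0 t' s * pi s a * Q s a s'
  end.

(* Cesaro average (1/T) sum_{t=1}^T Pr(s^t = s, a^t = a), indexed by T = n+1 *)
Definition cesaro_occ (Q : S -> A -> S -> R) (pi : S -> A -> R) (mu0 : S -> R)
  (s : S) (a : A) (n : nat) : R :=
  (n.+1%:R)^-1 * \sum_(t < n.+1) state_law Q pi mu0 t s * pi s a.

Definition is_occupancy (Q : S -> A -> S -> R) (pi : S -> A -> R) (mu0 : S -> R)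
  (rho : S -> A -> R) : Prop :=
  forall s a, cesaro_occ Q pi mu0 s a @ \oo --> rho s a.

End Defs.

(* Main.v *)
Require Import Defs.
From HB Require Import structures.
From mathcomp Require Import all_boot all_order all_algebra.
From mathcomp Require Import all_classical all_reals all_analysis.
From mathcomp Require Import ring lra.
Set Implicit Arguments. Unset Strict Implicit. Unset Printing Implicit Defensive.
Import Order.TTheory GRing.Theory Num.Theory.
Import numFieldNormedType.Exports.
Local Open Scope ring_scope.
Local Open Scope classical_set_scope.

Section Aux.
Variables (R : realType) (S A : finType).

Lemma cvg_sumR (I : finType) (f : I -> nat -> R) (l : I -> R) :
  (forall i, f i @ \oo --> l i) ->
  (fun n => \sum_(i : I) f i n) @ \oo --> \sum_(i : I) l i.
Proof.
move=> H; apply: cvg_big => //; exact: add_continuous.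
Qed.

Lemma law_distr (Q : S -> A -> S -> R) (pi : S -> A -> R) (mu0 : S -> R) :
  is_kernel Q -> is_policy pi -> is_distr mu0 ->
  forall t, is_distr (state_law Q pi mu0 t).
Proof.
move=> [Q0 Q1] [p0 p1] hmu; elim=> [|t [h0 h1]] //=; split.
  move=> s'; apply: sumr_ge0 => s _; apply: sumr_ge0 => a _.
  by rewrite !mulr_ge0.
rewrite exchange_big /=.
rewrite -h1; apply: eq_bigr => s _.
rewrite exchange_big /=.
under eq_bigr do rewrite -mulr_sumr Q1 mulr1.
by rewrite -mulr_sumr p1 mulr1.
Qed.

Lemma law_le1 (Q : S -> A -> S -> R) (pi : S -> A -> R) (mu0 : S -> R) :
  is_kernel Q -> is_policy pi -> is_distr mu0 ->
  forall t s, 0 <= state_law Q pi mu0 t s <= 1.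
Proof.
move=> hQ hp hm t s; have [h0 h1] := law_distr hQ hp hm t.
rewrite h0 /= -h1 (bigD1 s) //= lerDl; apply: sumr_ge0 => *; exact: h0.
Qed.


Lemma occ_props (Q : S -> A -> S -> R) (pi : S -> A -> R) (mu0 : S -> R)
  (rho : S -> A -> R) :
  is_kernel Q -> is_policy pi -> is_distr mu0 -> is_occupancy Q pi mu0 rho ->
  let nu := fun s => \sum_(a : A) rho s a in
  [/\ forall s a, rho s a = nu s * pi s a, forall s, 0 <= nu s,
      \sum_(s : S) nu s = 1 &
      forall s', nu s' = \sum_(s : S) \sum_(a : A) nu s * pi s a * Q s a s'].
Proof.
move=> hQ hp hm hocc nu.
have [p0 p1] := hp.
pose c := fun s n => (n.+1%:R)^-1 * \sum_(t < n.+1) state_law Q pi mu0 t s.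
have occE : forall s a n, cesaro_occ Q pi mu0 s a n = c s n * pi s a.
  by move=> s a n; rewrite /cesaro_occ /c -mulrA mulr_suml.
have hc : forall s, c s @ \oo --> nu s.
  move=> s.
  have E : (fun n => \sum_(a:A) cesaro_occ Q pi mu0 s a n) = c s.
    by apply/funext => n; under eq_bigr do rewrite occE; rewrite -mulr_sumr p1 mulr1.
  by rewrite -E; apply: cvg_sumR => a; exact: hocc.
split.
- move=> s a; apply: (norm_cvg_unique (hocc s a)).
  rewrite /= (eq_cvg \oo _ (occE s a)).
  by apply: cvgM; [exact: hc | exact: cvg_cst].
- move=> s; apply: (cvgr_to_ge (hc s)); apply: nearW => n.
  rewrite /c mulr_ge0 // ?invr_ge0 //; apply: sumr_ge0 => t _.
  by have /andP[] := law_le1 hQ hp hm t s.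
- have H := cvg_sumR hc.
  have E : (fun n => \sum_(s : S) c s n) = fun _ => 1.
    apply/funext => n; rewrite /c -mulr_sumr exchange_big /=.
    under eq_bigr do rewrite (law_distr hQ hp hm _).2.
    by rewrite sumr_const card_ord mulVf.
  rewrite E in H; apply: (norm_cvg_unique H); exact: cvg_cst.
move=> s'.
pose L := state_law Q pi mu0.
pose g := fun n => \sum_(s : S) \sum_(a : A) c s n * pi s a * Q s a s'.
have hg : g @ \oo --> \sum_(s : S) \sum_(a : A) nu s * pi s a * Q s a s'.
  apply: cvg_sumR => s; apply: cvg_sumR => a.
  apply: cvgM; [apply: cvgM|]; [exact: hc| exact: cvg_cst|exact: cvg_cst].
have gE : forall n, g n - c s' n = (n.+1%:R)^-1 * (L n.+1 s' - L 0%N s').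
  move=> n; rewrite /g /c.
  have -> : \sum_(s : S) \sum_(a : A) (n.+1%:R)^-1 * (\sum_(t < n.+1) L t s)
       * pi s a * Q s a s' = (n.+1%:R)^-1 * \sum_(t < n.+1) L t.+1 s'.
    rewrite mulr_sumr /=.
    transitivity (\sum_(s : S) \sum_(a : A) \sum_(t < n.+1)
       (n.+1%:R)^-1 * (L t s * pi s a * Q s a s')).
      apply: eq_bigr => s _; apply: eq_bigr => a _.
      rewrite mulr_sumr !mulr_suml; apply: eq_bigr => t _; by rewrite !mulrA.
    transitivity (\sum_(s : S) \sum_(t < n.+1) \sum_(a : A)
       (n.+1%:R)^-1 * (L t s * pi s a * Q s a s')).
      by apply: eq_bigr => s _; rewrite exchange_big.
    rewrite exchange_big /=; apply: eq_bigr => t _.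
    rewrite /= mulr_sumr; apply: eq_bigr => s _.
    rewrite mulr_sumr; by [].
  rewrite -mulrBr; congr (_ * _).
  rewrite -sumrB -(big_mkord xpredT (fun t => L t.+1 s' - L t s')).
  by rewrite telescope_sumr.
have hb : forall n, `|g n - c s' n| <= harmonic n.
  move=> n; rewrite gE normrM ger0_norm ?invr_ge0 // /harmonic /=.
  rewrite ler_piMr ?invr_ge0 //.
  have /andP[h1 h2] := law_le1 hQ hp hm n.+1 s'.
  have /andP[h3 h4] := law_le1 hQ hp hm 0%N s'.
  rewrite ler_norml; apply/andP; split; rewrite -/L in h1 h2 h3 h4; lra.
have hK := cvgB (cvg_norm (cvgB hg (hc s'))) (@cvg_harmonic R).
have : `|\sum_(s : S) \sum_(a : A) nu s * pi s a * Q s a s' - nu s'| - 0 <= 0.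
  apply: (cvgr_to_le (hK _ _ _)); apply: nearW => n /=.
  by rewrite subr_le0; exact: hb.
rewrite subr0 normr_le0 subr_eq0 => /eqP ->; by [].
Qed.
End Aux.

Theorem lemma8 (R : realType) (S A : finType) (alpha : R)
  (P P' : S -> A -> S -> R) (pi : S -> A -> R) (mu0 mu0' : S -> R)
  (rho rho' : S -> A -> R) :
  0 < alpha ->
  is_kernel P -> (forall s a s', alpha <= P s a s') ->
  is_kernel P' ->
  is_policy pi ->
  is_distr mu0 -> is_distr mu0' ->
  is_occupancy P pi mu0 rho ->
  is_occupancy P' pi mu0' rho' ->
  \sum_(s : S) \sum_(a : A) `|rho s a - rho' s a|
    <= (alpha * #|S|%:R)^-1 *
       \sum_(s : S) \sum_(a : A)
          (rho' s a * \sum_(s' : S) `|P s a s' - P' s a s'|).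
Proof.
move=> alpha0 hP hPa hP' hp hm hm' ho ho'.
have [rE nu0 nu1 nuS] := occ_props hP hp hm ho.
have [rE' nu0' nu1' nuS'] := occ_props hP' hp hm' ho'.
have [p0 p1] := hp.
have [P0 P1] := hP.
set nu := (fun s => \sum_a rho s a) in rE nu0 nu1 nuS.
set nu' := (fun s => \sum_a rho' s a) in rE' nu0' nu1' nuS'.
have {}nuS : forall s', nu s' = \sum_(s : S) \sum_(a : A) nu s * pi s a * P s a s' := nuS.
have {}nuS' : forall s', nu' s' = \sum_(s : S) \sum_(a : A) nu' s * pi s a * P' s a s' := nuS'.
have {}nu1 : \sum_(s : S) nu s = 1 := nu1.
have {}nu1' : \sum_(s : S) nu' s = 1 := nu1'.
have {}nu0' : forall s, 0 <= nu' s := nu0'.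
under eq_bigr do under eq_bigr do rewrite rE rE'.
under [X in _ <= _ * X]eq_bigr do under eq_bigr do rewrite rE'.
pose d := fun s => nu s - nu' s.
pose D := \sum_(s : S) `|d s|.
pose E := \sum_(s : S) \sum_(a : A)
          (nu' s * pi s a * \sum_(s' : S) `|P s a s' - P' s a s'|).
have LE : \sum_(s : S) \sum_(a : A) `|nu s * pi s a - nu' s * pi s a| = D.
  apply: eq_bigr => s _.
  under eq_bigr do rewrite -mulrBl normrM (ger0_norm (p0 _ _)).
  by rewrite -mulr_sumr p1 mulr1.
rewrite LE -/E.
have [s0 _|hS] := pickP (predT : pred S); last first.
  have e0 : forall F : S -> R, \sum_(s : S) F s = 0.
    by move=> F; rewrite big1 // => s _; have := hS s.
  by rewrite /D /E !e0 mulr0.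
have Sgt0 : (0 < #|S|)%N by apply/card_gt0P; exists s0.
have aS0 : 0 < alpha * #|S|%:R by rewrite mulr_gt0 // ltr0n.
rewrite ler_pdivlMl //.
pose M := fun s s' => \sum_(a : A) pi s a * P s a s'.
have sd : \sum_(s : S) d s = 0 by rewrite /d sumrB nu1 nu1' subrr.
have Mge : forall s s', alpha <= M s s'.
  move=> s s'; rewrite /M.
  have -> : alpha = \sum_(a : A) pi s a * alpha by rewrite -mulr_suml p1 mul1r.
  by apply: ler_sum => a _; rewrite ler_wpM2l.
have step1 : forall s', d s' = \sum_(s : S) d s * (M s s' - alpha) +
     \sum_(s : S) \sum_(a : A) nu' s * pi s a * (P s a s' - P' s a s').
  move=> s'.
  have -> : \sum_(s : S) d s * (M s s' - alpha) = \sum_(s : S) d s * M s s'.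
    by under eq_bigr do rewrite mulrBr; rewrite sumrB -mulr_suml sd mul0r subr0.
  rewrite /d (nuS s') (nuS' s').
  have -> : \sum_(s : S) \sum_(a : A) nu s * pi s a * P s a s' -
     \sum_(s : S) \sum_(a : A) nu' s * pi s a * P' s a s' =
     \sum_(s : S) \sum_(a : A) (nu s * pi s a * P s a s' - nu' s * pi s a * P' s a s').
    by rewrite -sumrB; apply: eq_bigr => s _; rewrite sumrB.
  rewrite -big_split; apply: eq_bigr => s _.
  rewrite /M mulr_sumr -big_split; apply: eq_bigr => a _ /=; ring.
have step2 : forall s', `|d s'| <= \sum_(s : S) `|d s| * (M s s' - alpha) +
     \sum_(s : S) \sum_(a : A) nu' s * pi s a * `|P s a s' - P' s a s'|.
  move=> s'; rewrite step1; apply: (le_trans (ler_normD _ _)); apply: lerD.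
    apply: (le_trans (ler_norm_sum _ _ _)); apply: ler_sum => s _.
    by rewrite normrM (@ger0_norm _ (M s s' - alpha)) // subr_ge0.
  apply: (le_trans (ler_norm_sum _ _ _)); apply: ler_sum => s _.
  apply: (le_trans (ler_norm_sum _ _ _)); apply: ler_sum => a _.
  by rewrite normrM ger0_norm // mulr_ge0.
have step3 : D <= D * (1 - alpha * #|S|%:R) + E.
  apply: (le_trans (ler_sum _ (fun s' _ => step2 s'))).
  rewrite big_split /=; apply: lerD.
    rewrite exchange_big /= /D mulr_suml; apply: ler_sum => s _.
    rewrite -mulr_sumr sumrB sumr_const.
    have -> : \sum_(i : S) M s i = 1.
      rewrite /M exchange_big /=.
      under eq_bigr do rewrite -mulr_sumr P1 mulr1.
      exact: p1.
    by rewrite -[alpha *+ _]mulr_natr.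
  rewrite /E exchange_big /=; apply: ler_sum => s _.
  rewrite exchange_big /=; apply: ler_sum => a _.
  by rewrite mulr_sumr.
move: step3; rewrite mulrBr mulr1 addrAC -addrA lerDl subr_ge0 mulrC //.
Qed.
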